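(* Let $\mathbb{S}^2_\infty$ be the Euclidean unit sphere centered at the origin in $\mathbb{R}^3$, equipped with the $\ell^\infty$-metric, and $\mathbb{D}^3_\infty$ the Euclidean closed unit ball with the $\ell^\infty$-metric. Then: (1) $\mathcal{F}(\mathbb{S}^2_\infty)=\mathcal{E}(\mathbb{S}^2_\infty)$, and this set is isometric to the tight span $\mathbf{E}(\mathbb{S}^2_\infty)$; (2) $\mathcal{F}(\mathbb{D}^3_\infty)=\mathcal{E}(\mathbb{D}^3_\infty)=\mathcal{F}(\mathbb{S}^2_\infty)$, and this set is isometric to the tight span $\mathbf{E}(\mathbb{D}^3_\infty)$. In addition, $\mathbf{E}(\mathbb{D}^3_\infty)$ is isometric to $\mathbf{E}(\mathbb{S}^2_\infty)$.
   Context: $\mathbb{R}^3_\infty$ is $\mathbb{R}^3$ with the $\ell^\infty$-metric $d_\infty$. For $1\le i\le 3$, $\Lambda_i=\{x:x_i=\|x\|_\infty\}$ and $p+\xi\Lambda_i=\{p+\xi z:z\in\Lambda_i\}$ for $\xi\in\{\pm1\}$. For compact $X\subseteq\mathbb{R}^3_\infty$: $\mathcal{F}(X)$ is the set of points $p$ with $(p+\xi\Lambda_i)\cap X\ne\emptyset$ for all $i$ and $\xi$ ($X$-surrounding points); $\mathcal{E}(X)$ is the set of points $z\in\mathbb{R}^3$ such that for every $x\in X$ there is $y\in X$ with $d_\infty(x,z)+d_\infty(z,y)=d_\infty(x,y)$ ($X$-minimal points); both carry the metric $d_\infty$. For a metric space $X$, $\Delta(X)=\{f:X\to\mathbb{R}\text{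 bounded}:f(x)+f(x')\ge d_X(x,x')\}$ and the tight span $\mathbf{E}(X)$ is the set of pointwise-minimal elements of $\Delta(X)$ with the sup-norm metric. *)

(* Defs.v *)
From Stdlib Require Import Reals.
From Coquelicot Require Import Coquelicot.
Open Scope R_scope.

Record pt := Pt { px : R; py : R; pz : R }.

Inductive idx := I1 | I2 | I3.

Definition coord (p : pt) (i : idx) : R :=
  match i with I1 => px p | I2 => py p | I3 => pz p end.

Definition ptadd (p q : pt) : pt := Pt (px p + px q) (py p + py q) (pz p + pz q).
Definition ptscale (a : R) (p : pt) : pt := Pt (a * px p) (a * py p) (a * pz p).
Definition ptsub (p q : pt) : pt := ptadd p (ptscale (-1) q).

Definition ninf (p : pt) : R := Rmax (Rabs (px p)) (Rmax (Rabs (py p)) (Rabs (pz p))).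
Definition dinf (p q : pt) : R := ninf (ptsub p q).

Definition Lambda (i : idx) (x : pt) : Prop := coord x i = ninf x.

Definition cone_meets (X : pt -> Prop) (p : pt) (i : idx) (xi : R) : Prop :=
  exists z, Lambda i z /\ X (ptadd p (ptscale xi z)).

Definition surrounding (X : pt -> Prop) (p : pt) : Prop :=
  forall (i : idx) (xi : R), (xi = 1 \/ xi = -1) -> cone_meets X p i xi.

Definition minimal_pts (X : pt -> Prop) (z : pt) : Prop :=
  forall x, X x -> exists y, X y /\ dinf x z + dinf z y = dinf x y.

Definition in_Delta {T : Type} (d : T -> T -> R) (f : T -> R) : Prop :=
  (exists M, forall x, Rabs (f x) <= M) /\
  (forall x x', f x + f x' >= d x x').

Definition in_tight_span {T : Type} (d : T -> T -> R) (f : T -> R) : Prop :=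
  in_Delta d f /\
  (forall g, in_Delta d g -> (forall x, g x <= f x) -> forall x, g x = f x).

Definition tight_span {T : Type} (d : T -> T -> R) : Type :=
  { f : T -> R | in_tight_span d f }.

Definition supdist {T : Type} (f g : T -> R) : R :=
  real (Lub_Rbar (fun r => exists x, r = Rabs (f x - g x))).

Definition ts_dist {T : Type} (d : T -> T -> R) (f g : tight_span d) : R :=
  supdist (proj1_sig f) (proj1_sig g).

Definition sub (X : pt -> Prop) : Type := { p : pt | X p }.
Definition subd (X : pt -> Prop) (a b : sub X) : R := dinf (proj1_sig a) (proj1_sig b).

Definition isometric (A B : Type) (dA : A -> A -> R) (dB : B -> B -> R) : Prop :=
  exists phi : A -> B,
    (forall a a', dB (phi a) (phi a') = dA a a') /\ (forall b, exists a, phi a = b).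

Definition S2 (p : pt) : Prop := px p ^ 2 + py p ^ 2 + pz p ^ 2 = 1.
Definition D3 (p : pt) : Prop := px p ^ 2 + py p ^ 2 + pz p ^ 2 <= 1.

(* Main.v *)
Require Import Defs.
From Stdlib Require Import Reals.
From Coquelicot Require Import Coquelicot.
Open Scope R_scope.
From HB Require Import structures.
From mathcomp Require Import all_boot all_order all_algebra.
From mathcomp Require Import all_classical all_reals.
From mathcomp Require Import topology normedtype derive Rstruct Rstruct_topology.
From Stdlib Require Import Lra Psatz Classical ProofIrrelevance FunctionalExtensionality IndefiniteDescription.
Import numFieldNormedType.Exports.
Import Order.TTheory GRing.Theory Num.Theory.
Local Open Scope classical_set_scope.
Local Open Scope R_scope.
Notation coord := Defs.coord.
Lemma lip_cont (psi : R * R * R -> R) (v : R * R * R) (L : R) :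
  0 < L ->
  (forall w, Rabs (v.1.1 - w.1.1) < 1 -> Rabs (v.1.2 - w.1.2) < 1 -> Rabs (v.2 - w.2) < 1 ->
     Rabs (psi v - psi w) <= L * Rmax (Rabs (v.1.1 - w.1.1)) (Rmax (Rabs (v.1.2 - w.1.2)) (Rabs (v.2 - w.2)))) ->
  {for v, continuous psi}.
Proof.
move=> L0 H.
move=> /=; apply/(@cvgrPdist_le _ R^o) => e /RltP e0.
have {}e0 : 0 < e by exact: e0.
set d := Rmin 1 (e / L).
have d0 : 0 < d.
  apply: Rmin_pos; first lra. apply: Rdiv_lt_0_compat; lra.
have : nbhs v (ball v d).
  apply: nbhsx_ballx. by apply/RltP.
apply: filterS => w [[/= h1 h2] h3].
move: h1 h2 h3; rewrite /ball /= => /RltP h1 /RltP h2 /RltP h3.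
apply/RleP.
have {}h1 : Rabs (v.1.1 - w.1.1) < d := h1.
have {}h2 : Rabs (v.1.2 - w.1.2) < d := h2.
have {}h3 : Rabs (v.2 - w.2) < d := h3.
change (Rabs (psi v - psi w) <= e).
have hd1 : d <= 1 by apply: Rmin_l.
have hd2 : d <= e / L by apply: Rmin_r.
have hw1 : Rabs (v.1.1 - w.1.1) < 1 by lra.
have hw2 : Rabs (v.1.2 - w.1.2) < 1 by lra.
have hw3 : Rabs (v.2 - w.2) < 1 by lra.
have := H w hw1 hw2 hw3.
have : L * Rmax (Rabs (v.1.1 - w.1.1)) (Rmax (Rabs (v.1.2 - w.1.2)) (Rabs (v.2 - w.2))) <= L * (e / L).
  apply: Rmult_le_compat_l; first lra.
  repeat apply: Rmax_lub; lra.
have -> : L * (e / L) = e by field; lra.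
move=> Ha Hb.
exact: (Rle_trans _ _ _ Hb Ha).
Qed.

Lemma sq_lip (a b : R) : Rabs (a - b) < 1 -> Rabs (a ^ 2 - b ^ 2) <= (2 * Rabs a + 1) * Rabs (a - b).
Proof.
move=> h.
have -> : a ^ 2 - b ^ 2 = (a - b) * (a + b) by ring.
rewrite Rabs_mult (Rmult_comm (Rabs (a - b))).
apply: Rmult_le_compat_r; first exact: Rabs_pos.
have -> : a + b = 2 * a - (a - b) by ring.
apply: Rle_trans (Rabs_triang _ _) _.
rewrite Rabs_Ropp Rabs_mult (Rabs_right 2); lra.
Qed.

Definition gpt (v : R * R * R) : pt := Pt v.1.1 v.1.2 v.2.
Definition hsq (v : R * R * R) : R := v.1.1 ^ 2 + v.1.2 ^ 2 + v.2 ^ 2.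

Lemma hsq_cont_at (v : R * R * R) : {for v, continuous hsq}.
Proof.
apply: (@lip_cont _ v (3 * (2 * (Rabs v.1.1 + Rabs v.1.2 + Rabs v.2) + 1))).
  have := Rabs_pos v.1.1; have := Rabs_pos v.1.2; have := Rabs_pos v.2; lra.
move=> w h1 h2 h3.
rewrite /hsq.
have e1 := sq_lip _ _ h1; have e2 := sq_lip _ _ h2; have e3 := sq_lip _ _ h3.
set M := Rmax _ _.
have m1 : Rabs (v.1.1 - w.1.1) <= M by apply: Rmax_l.
have m2 : Rabs (v.1.2 - w.1.2) <= M by apply: Rle_trans (Rmax_r _ _); apply: Rmax_l.
have m3 : Rabs (v.2 - w.2) <= M by apply: Rle_trans (Rmax_r _ _); apply: Rmax_r.
have p1 := Rabs_pos v.1.1; have p2 := Rabs_pos v.1.2; have p3 := Rabs_pos v.2.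
have -> : v.1.1 ^ 2 + v.1.2 ^ 2 + v.2 ^ 2 - (w.1.1 ^ 2 + w.1.2 ^ 2 + w.2 ^ 2)
  = (v.1.1 ^ 2 - w.1.1 ^ 2) + (v.1.2 ^ 2 - w.1.2 ^ 2) + (v.2 ^ 2 - w.2 ^ 2) by ring.
apply: Rle_trans (Rabs_triang _ _) _.
apply: Rle_trans (Rplus_le_compat_r _ _ _ (Rabs_triang _ _)) _.
have q1 : (2 * Rabs v.1.1 + 1) * Rabs (v.1.1 - w.1.1) <= (2 * Rabs v.1.1 + 1) * M.
  apply: Rmult_le_compat_l; lra.
have q2 : (2 * Rabs v.1.2 + 1) * Rabs (v.1.2 - w.1.2) <= (2 * Rabs v.1.2 + 1) * M.
  apply: Rmult_le_compat_l; lra.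
have q3 : (2 * Rabs v.2 + 1) * Rabs (v.2 - w.2) <= (2 * Rabs v.2 + 1) * M.
  apply: Rmult_le_compat_l; lra.
have M0 : 0 <= M by apply: Rle_trans m1; apply: Rabs_pos.
have SM : 0 <= (Rabs v.1.1 + Rabs v.1.2 + Rabs v.2) * M by apply: Rmult_le_pos; lra.
lra.
Qed.

Lemma hsq_cont : continuous hsq.
Proof. move=> v; exact: hsq_cont_at. Qed.

Lemma dinf_gpt v w : dinf (gpt v) (gpt w) =
  Rmax (Rabs (v.1.1 - w.1.1)) (Rmax (Rabs (v.1.2 - w.1.2)) (Rabs (v.2 - w.2))).
Proof. rewrite /dinf /ninf /ptsub /ptadd /ptscale /gpt /=. by rewrite !Ropp_mult_distr_l_reverse !Rmult_1_l. Qed.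

Lemma comp_cont_at (phi : pt -> R) (L : R) (L0 : 0 < L)
  (HL : forall a b, Rabs (phi a - phi b) <= L * dinf a b) (v : R * R * R) :
  {for v, continuous (fun w => phi (gpt w))}.
Proof.
apply: (@lip_cont _ v L L0) => w _ _ _.
rewrite -dinf_gpt; exact: HL.
Qed.

Lemma evt (X : pt -> Prop) (hX : X = S2 \/ X = D3) (phi : pt -> R) (L : R) (L0 : 0 < L)
  (HL : forall a b, Rabs (phi a - phi b) <= L * dinf a b) :
  exists c, X c /\ forall t, X t -> phi t <= phi c.
Proof.
set A := [set v : R * R * R | X (gpt v)].
have A0 : A !=set0.
  exists (1, 0, 0); rewrite /A /gpt /=.
  by case: hX => ->; rewrite /S2 /D3 /=; lra.
have cA : compact A.
  have clA : closed A.
    case: hX => HX.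
    - have := preimage_closed (fun x _ => hsq_cont x) (@closed_eq R 1).
      by rewrite /A HX /S2 /hsq /gpt /=.
    - have := preimage_closed (fun x _ => hsq_cont x) (@closed_le R 1).
      have -> : hsq @^-1` [set x | (x <= 1)%R] = A.
        rewrite /A HX /D3 /hsq /gpt /=; apply/seteqP; split => x /=.
        + by move/RleP.
        + by move/RleP.
      by [].
  apply: (subclosed_compact clA (compact_setX (compact_setX (@segment_compact R (-1) 1) (@segment_compact R (-1) 1)) (@segment_compact R (-1) 1))).
  move=> [[x y] z]; rewrite /A /gpt /= => hx.
  have hd : x ^ 2 + y ^ 2 + z ^ 2 <= 1 by case: hX hx => ->; rewrite /S2 /D3 /=; lra.
  have bx : -1 <= x <= 1 by split; nra.
  have by' : -1 <= y <= 1 by split; nra.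
  have bz : -1 <= z <= 1 by split; nra.
  rewrite /= !in_itv /=.
  split; [split|]; apply/andP; split; apply/RleP. - exact: (proj1 bx). - exact: (proj2 bx). - exact: (proj1 by'). - exact: (proj2 by'). - exact: (proj1 bz). - exact: (proj2 bz).
have cf : {within A, continuous (fun w => phi (gpt w))}.
  apply: continuous_subspaceT => v; exact: (@comp_cont_at phi L L0 HL).
have [c cA' hc] := compact_EVT_max A0 cA cf.
exists (gpt c); split.
  by move: cA'; rewrite inE.
move=> t Xt.
have := hc (px t, py t, pz t).
have -> : gpt (px t, py t, pz t) = t by case: t {Xt}.
move=> h; apply/RleP; apply: h; rewrite inE /A /=.
by have -> : gpt (px t, py t, pz t) = t by case: t {Xt}.
Qed.

Lemma dinf_expand a b : dinf a b =
  Rmax (Rabs (px a - px b)) (Rmax (Rabs (py a - py b)) (Rabs (pz a - pz b))).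
Proof.
rewrite /dinf /ninf /ptsub /ptadd /ptscale /=.
by rewrite !Ropp_mult_distr_l_reverse !Rmult_1_l.
Qed.

Lemma dinf_ge a b : Rabs (px a - px b) <= dinf a b /\ Rabs (py a - py b) <= dinf a b
  /\ Rabs (pz a - pz b) <= dinf a b.
Proof.
rewrite dinf_expand; split; [apply: Rmax_l|split].
- apply: Rle_trans (Rmax_r _ _); apply: Rmax_l.
- apply: Rle_trans (Rmax_r _ _); apply: Rmax_r.
Qed.

Lemma Rmax_cases a b : Rmax a b = a \/ Rmax a b = b.
Proof. rewrite /Rmax; case: (Rle_dec a b) => _; [right|left]; reflexivity. Qed.

Lemma dinf_cases a b : dinf a b = Rabs (px a - px b) \/ dinf a b = Rabs (py a - py b)
  \/ dinf a b = Rabs (pz a - pz b).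
Proof.
rewrite dinf_expand.
case: (Rmax_cases (Rabs (px a - px b)) (Rmax (Rabs (py a - py b)) (Rabs (pz a - pz b)))) => ->; [by left|right].
case: (Rmax_cases (Rabs (py a - py b)) (Rabs (pz a - pz b))) => ->; [by left|by right].
Qed.

Lemma dinf_coord a b i : Rabs (coord a i - coord b i) <= dinf a b.
Proof. have [h1 [h2 h3]] := dinf_ge a b; by case: i. Qed.

Lemma dinf_coord_ex a b : exists i, dinf a b = Rabs (coord a i - coord b i).
Proof.
case: (dinf_cases a b) => [h|[h|h]]; [exists I1|exists I2|exists I3]; exact: h.
Qed.

Lemma dinf_pos a b : 0 <= dinf a b.
Proof. apply: Rle_trans (Rabs_pos _) (proj1 (dinf_ge a b)). Qed.

Lemma Rabs_sym u v : Rabs (u - v) = Rabs (v - u).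
Proof. by rewrite -Rabs_Ropp Ropp_minus_distr. Qed.

Lemma dinf_sym a b : dinf a b = dinf b a.
Proof. by rewrite !dinf_expand (Rabs_sym (px a)) (Rabs_sym (py a)) (Rabs_sym (pz a)). Qed.

Lemma dinf_refl a : dinf a a = 0.
Proof. rewrite dinf_expand !Rminus_diag Rabs_R0 /Rmax. by repeat case: Rle_dec. Qed.

Lemma Rabs_tri3 u v w : Rabs (u - w) <= Rabs (u - v) + Rabs (v - w).
Proof. have -> : u - w = (u - v) + (v - w) by ring. exact: Rabs_triang. Qed.

Lemma dinf_tri a b c : dinf a c <= dinf a b + dinf b c.
Proof.
have [i ->] := dinf_coord_ex a c.
apply: Rle_trans (Rabs_tri3 _ (coord b i) _) _.
apply: Rplus_le_compat; exact: dinf_coord.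
Qed.

Lemma pt_eq a b : px a = px b -> py a = py b -> pz a = pz b -> a = b.
Proof. case: a => ? ? ?; case: b => ? ? ? /= -> -> -> //. Qed.

Lemma dinf_eq0 a b : dinf a b = 0 -> a = b.
Proof.
move=> h; have [h1 [h2 h3]] := dinf_ge a b; rewrite h in h1 h2 h3.
have := Rabs_pos (px a - px b); have := Rabs_pos (py a - py b); have := Rabs_pos (pz a - pz b).
move=> q3 q2 q1.
apply: pt_eq; apply: Rminus_diag_uniq; apply: Rabs_eq_0; lra.
Qed.

Lemma Rabs_sum_eq u v : Rabs (u + v) = Rabs u + Rabs v -> 0 <= u * v.
Proof.
move=> h; split_Rabs; nra.
Qed.

Lemma partner x p y : dinf x y = dinf x p + dinf p y -> exists i,
  Rabs (coord x i - coord p i) = dinf x p /\ Rabs (coord p i - coord y i) = dinf p y /\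
  0 <= (coord x i - coord p i) * (coord p i - coord y i).
Proof.
move=> h; have [i hi] := dinf_coord_ex x y; exists i.
have h1 := dinf_coord x p i; have h2 := dinf_coord p y i.
have h3 := Rabs_tri3 (coord x i) (coord p i) (coord y i).
split; first lra. split; first lra.
apply: Rabs_sum_eq.
have -> : coord x i - coord p i + (coord p i - coord y i) = coord x i - coord y i by ring.
lra.
Qed.

Lemma cone1P X p : cone_meets X p I1 1 <->
  exists y, X y /\ Rabs (py y - py p) <= px y - px p /\ Rabs (pz y - pz p) <= px y - px p.
Proof.
split.
- move=> [z [hz hX]]; exists (ptadd p (ptscale 1 z)); split => //.
  move: hz; rewrite /Lambda /ninf /=.
  have k : forall u v, u + 1 * v - u = v by move=> u v; ring.
  rewrite !k; move=> hz.
  have e1 := Rmax_l (Rabs (px z)) (Rmax (Rabs (py z)) (Rabs (pz z))).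
  have e2 := Rmax_l (Rabs (py z)) (Rabs (pz z)).
  have e3 := Rmax_r (Rabs (py z)) (Rabs (pz z)).
  have e4 := Rmax_r (Rabs (px z)) (Rmax (Rabs (py z)) (Rabs (pz z))).
  split; lra.
- move=> [y [hy [h2 h3]]]; exists (ptsub y p); split.
  + rewrite /Lambda /ninf /ptsub /ptadd /ptscale /=.
    have k : forall u v, u + -1 * v = u - v by move=> u v; ring.
    rewrite !k.
    have q := Rabs_pos (py y - py p).
    have q' := Rabs_pos (pz y - pz p).
    have h1 : Rabs (px y - px p) = px y - px p by apply: Rabs_right; lra.
    rewrite h1 /Rmax; repeat case: Rle_dec => /=; lra.
  + have -> : ptadd p (ptscale 1 (ptsub y p)) = y.
      apply: pt_eq; rewrite /=; ring.
    exact: hy.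
Qed.

Lemma alg_final (b c y2 y3 : R) :
  0 <= (y2 - b) * b -> Rabs (y3 - c) <= Rabs (y2 - b) -> Rabs c <= Rabs b ->
  1 < b * b + c * c -> 1 < y2 * y2 + y3 * y3.
Proof. move=> H1 H2 H3 H4; split_Rabs; nra. Qed.

Lemma strict_partner x p y :
  Rabs (py x - py p) < px p - px x -> Rabs (pz x - pz p) < px p - px x ->
  dinf x y = dinf x p + dinf p y ->
  Rabs (py y - py p) <= px y - px p /\ Rabs (pz y - pz p) <= px y - px p.
Proof.
move=> h2 h3 e.
have [g1 [g2 g3]] := dinf_ge x p.
have ab : px p - px x <= Rabs (px x - px p).
  rewrite Rabs_sym; exact: Rle_abs.
have dxp : dinf x p = px p - px x.
  case: (dinf_cases x p) => [d|[d|d]].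
  - rewrite d Rabs_left1; first ring. have := Rabs_pos (py x - py p). lra.
  - exfalso; lra.
  - exfalso; lra.
have [k1 [k2 k3]] := dinf_ge p y.
have [i [hi1 [hi2 hi3]]] := partner _ _ _ e.
case: i hi1 hi2 hi3 => /= hi1 hi2 hi3.
- have hy : px p - px y <= 0.
    have hx : px x - px p < 0 by have := Rabs_pos (py x - py p); lra.
    nra.
  rewrite Rabs_left1 in hi2; last by lra.
  rewrite (Rabs_sym (py y)) (Rabs_sym (pz y)). lra.
- lra.
- lra.
Qed.

Lemma aux_neg (t B : R) : 0 < t -> B * t <= 0 -> B <= 0.
Proof. move=> h1 h2; nra. Qed.

Lemma aux_pos (t B : R) : 0 < t -> 0 <= t * B -> 0 <= B.
Proof. move=> h1 h2; nra. Qed.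

Lemma aux3 (u v w : R) : u ^ 2 + v ^ 2 + w ^ 2 <= 1 -> 1 < v * v + w * w -> False.
Proof. move=> h1 h2; nra. Qed.

Lemma main1 (X : pt -> Prop) (HS : forall q, S2 q -> X q) (HD : forall q, X q -> D3 q) p :
  minimal_pts X p -> cone_meets X p I1 1.
Proof.
move=> Hmin; apply/cone1P.
apply: NNPP => Hn.
have inc : forall y, X y -> Rabs (py y - py p) <= px y - px p ->
    Rabs (pz y - pz p) <= px y - px p -> False.
  by move=> y Xy h2 h3; apply: Hn; exists y.
have strict : forall x, X x -> Rabs (py x - py p) < px p - px x ->
    Rabs (pz x - pz p) < px p - px x -> False.
  move=> x Xx h2 h3; have [y [Xy e]] := Hmin x Xx.
  have [k2 k3] := strict_partner x p y h2 h3 (esym e).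
  exact: (inc y Xy k2 k3).
case: p Hmin inc strict Hn => a b c Hmin inc strict Hn /=.
rewrite /= in inc strict.
case: (Rle_lt_dec (b * b + c * c) 1) => hbc.
- set h := sqrt (1 - b * b - c * c).
  have hh : h * h = 1 - b * b - c * c by apply: sqrt_sqrt; lra.
  have h0 : 0 <= h by apply: sqrt_pos.
  have Sx : S2 (Pt h b c) by rewrite /S2 /=; nra.
  case: (Rle_lt_dec a h) => ha.
  + apply: (inc _ (HS _ Sx)); rewrite /= Rminus_diag Rabs_R0; lra.
  + apply: (strict _ (HS _ Sx)); rewrite /= Rminus_diag Rabs_R0; lra.
- set r := sqrt (b * b + c * c).
  have rr : r * r = b * b + c * c by apply: sqrt_sqrt; nra.
  have r0 : 0 <= r by apply: sqrt_pos.
  have r1 : 1 < r by nra.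
  set s := / r.
  have sr : s * r = 1 by rewrite /s; field; lra.
  have s0 : 0 < s by rewrite /s; apply: Rinv_0_lt_compat; lra.
  have s1 : s < 1 by nra.
  have Sy0 : S2 (Pt 0 (b * s) (c * s)) by rewrite /S2 /=; nra.
  have Sx1 : S2 (Pt 0 (- b * s) (- c * s)) by rewrite /S2 /=; nra.
  set B := Rabs b; set C := Rabs c.
  have B0 : 0 <= B by apply: Rabs_pos.
  have C0 : 0 <= C by apply: Rabs_pos.
  have BB : B * B = b * b by rewrite /B -Rabs_mult Rabs_right; nra.
  have CC : C * C = c * c by rewrite /C -Rabs_mult Rabs_right; nra.
  have eb1 : Rabs (b * s - b) = B * (1 - s).
    have -> : b * s - b = b * (- (1 - s)) by ring.
    by rewrite Rabs_mult Rabs_Ropp (Rabs_right (1 - s)) //; lra.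
  have ec1 : Rabs (c * s - c) = C * (1 - s).
    have -> : c * s - c = c * (- (1 - s)) by ring.
    by rewrite Rabs_mult Rabs_Ropp (Rabs_right (1 - s)) //; lra.
  have eb2 : Rabs (- b * s - b) = B * (1 + s).
    have -> : - b * s - b = b * (- (1 + s)) by ring.
    by rewrite Rabs_mult Rabs_Ropp (Rabs_right (1 + s)) //; lra.
  have ec2 : Rabs (- c * s - c) = C * (1 + s).
    have -> : - c * s - c = c * (- (1 + s)) by ring.
    by rewrite Rabs_mult Rabs_Ropp (Rabs_right (1 + s)) //; lra.
  set Mx := Rmax (B * (1 - s)) (C * (1 - s)).
  have m1 : B * (1 - s) <= Mx := Rmax_l _ _.
  have m2 : C * (1 - s) <= Mx := Rmax_r _ _.
  case: (Rle_lt_dec Mx (- a)) => q1.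
    apply: (inc _ (HS _ Sy0)); rewrite /= ?eb1 ?ec1; lra.
  case: (Rlt_le_dec Mx a) => q2.
    apply: (strict _ (HS _ Sy0)); rewrite /= ?eb1 ?ec1; lra.
  have [y [Xy e]] := Hmin _ (HS _ Sx1).
  have Dy := HD _ Xy.
  have [i [hi1 [hi2 hi3]]] := partner _ _ _ (esym e).
  have [g1 [g2 g3]] := dinf_ge (Pt 0 (- b * s) (- c * s)) (Pt a b c).
  have [k1 [k2 k3]] := dinf_ge (Pt a b c) y.
  rewrite /= in k1 k2 k3.
  rewrite /= eb2 ec2 in g2 g3.
  rewrite /D3 in Dy.
  case: i hi1 hi2 hi3 => /= hi1 hi2 hi3.
  - rewrite /= Rminus_0_l Rabs_Ropp in g1 hi1.
    have ha : Rabs a <= Mx by apply: Rabs_le; lra.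
    have MxE := Rmax_cases (B * (1 - s)) (C * (1 - s)).
    rewrite -/Mx in MxE.
    have bc : 1 < B * B + C * C by lra.
    case: MxE => MxE.
    + have hB : B <= 0 by apply: (aux_neg s); lra.
      have B00 : B = 0 by lra.
      rewrite B00 Rmult_0_l in MxE.
      have hC : C <= 0 by apply: (aux_neg (1 + s)); lra.
      have C00 : C = 0 by lra.
      rewrite B00 C00 in bc; lra.
    + have hC : C <= 0 by apply: (aux_neg s); lra.
      have C00 : C = 0 by lra.
      rewrite C00 Rmult_0_l in MxE.
      have hB : B <= 0 by apply: (aux_neg (1 + s)); lra.
      have B00 : B = 0 by lra.
      rewrite B00 C00 in bc; lra.
  - rewrite eb2 in hi1.
    have BC : C <= B.
      have : (C - B) <= 0 by apply: (aux_neg (1 + s)); lra.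
      lra.
    have sg : 0 <= (py y - b) * b.
      apply: (aux_pos (1 + s)); first lra.
      have -> : (1 + s) * ((py y - b) * b) = (- b * s - b) * (b - py y) by ring.
      exact: hi3.
    have := alg_final b c (py y) (pz y) sg.
    rewrite (Rabs_sym (pz y)) (Rabs_sym (py y)) => H.
    have := H ltac:(lra) BC hbc. exact: aux3 Dy.
  - rewrite ec2 in hi1.
    have BC : B <= C.
      have : (B - C) <= 0 by apply: (aux_neg (1 + s)); lra.
      lra.
    have sg : 0 <= (pz y - c) * c.
      apply: (aux_pos (1 + s)); first lra.
      have -> : (1 + s) * ((pz y - c) * c) = (- c * s - c) * (c - pz y) by ring.
      exact: hi3.
    have := alg_final c b (pz y) (py y) sg.
    rewrite (Rabs_sym (pz y)) (Rabs_sym (py y)) => H.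
    have := H ltac:(lra) BC ltac:(lra) => H2.
    apply: (aux3 _ _ _ Dy); lra.
Qed.

Definition sig (i : idx) (e : R) (q : pt) : pt :=
  match i with
  | I1 => Pt (e * px q) (py q) (pz q)
  | I2 => Pt (e * py q) (px q) (pz q)
  | I3 => Pt (e * pz q) (py q) (px q)
  end.
Definition tau (i : idx) (e : R) (q : pt) : pt :=
  match i with
  | I1 => Pt (e * px q) (py q) (pz q)
  | I2 => Pt (py q) (e * px q) (pz q)
  | I3 => Pt (pz q) (py q) (e * px q)
  end.

Ltac pm1 he := case: he => ->.

Lemma tau_sig i e (he : e = 1 \/ e = -1) q : tau i e (sig i e q) = q.
Proof. case: q => x y z; pm1 he; case: i; apply: pt_eq => /=; ring. Qed.

Lemma sig_tau i e (he : e = 1 \/ e = -1) q : sig i e (tau i e q) = q.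
Proof. case: q => x y z; pm1 he; case: i; apply: pt_eq => /=; ring. Qed.

Lemma rmax_tac_ok (a b c a' b' c' : R) :
  ((a' = a /\ b' = b /\ c' = c) \/ (a' = b /\ b' = a /\ c' = c) \/ (a' = c /\ b' = b /\ c' = a)) ->
  Rmax a' (Rmax b' c') = Rmax a (Rmax b c).
Proof.
case=> [[->[->->]]|[[->[->->]]|[->[->->]]]] //; rewrite /Rmax; repeat case: Rle_dec => /=; lra.
Qed.

Lemma dinf_sig i e (he : e = 1 \/ e = -1) a b : dinf (sig i e a) (sig i e b) = dinf a b.
Proof.
rewrite !dinf_expand; apply: rmax_tac_ok.
have k : forall u v, Rabs (e * u - e * v) = Rabs (u - v).
  move=> u v; pm1 he; [rewrite !Rmult_1_l // | ].
  have -> : -1 * u - -1 * v = - (u - v) by ring. by rewrite Rabs_Ropp.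
case: i => /=; rewrite k; [left|right;left|right;right]; done.
Qed.

Lemma S2_tau i e (he : e = 1 \/ e = -1) q : S2 (tau i e q) <-> S2 q.
Proof.
case: q => x y z; rewrite /S2; pm1 he; case: i => /=; split => h; nra.
Qed.

Lemma D3_tau i e (he : e = 1 \/ e = -1) q : D3 (tau i e q) <-> D3 q.
Proof.
case: q => x y z; rewrite /D3; pm1 he; case: i => /=; split => h; nra.
Qed.

Lemma ninf_lam (a b c : R) : a = Rmax (Rabs a) (Rmax (Rabs b) (Rabs c)) ->
  0 <= a /\ Rabs b <= a /\ Rabs c <= a.
Proof.
move=> h. have := Rmax_l (Rabs a) (Rmax (Rabs b) (Rabs c)).
have := Rmax_l (Rabs b) (Rabs c). have := Rmax_r (Rabs b) (Rabs c).
have := Rmax_r (Rabs a) (Rmax (Rabs b) (Rabs c)). have := Rabs_pos a.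
move=> *; split; first lra. split; lra.
Qed.

Lemma lam_ninf (a b c : R) : 0 <= a -> Rabs b <= a -> Rabs c <= a ->
  a = Rmax (Rabs a) (Rmax (Rabs b) (Rabs c)).
Proof.
move=> h1 h2 h3; rewrite (Rabs_right a); last lra.
rewrite /Rmax; repeat case: Rle_dec => /=; lra.
Qed.

Lemma Rabs_pm e (he : e = 1 \/ e = -1) u : Rabs (e * u) = Rabs u.
Proof. pm1 he; [by rewrite Rmult_1_l | by rewrite -Ropp_mult_distr_l Rmult_1_l Rabs_Ropp]. Qed.

Lemma cone_transport X p i e (he : e = 1 \/ e = -1) :
  cone_meets (fun q => X (tau i e q)) (sig i e p) I1 1 -> cone_meets X p i e.
Proof.
move=> [[z1 z2 z3] [Lz Xz]]; exists (ptscale e (tau i e (Pt z1 z2 z3))); split.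
- move: Lz; rewrite /Lambda /ninf /= => Lz.
  have [h1 [h2 h3]] := ninf_lam _ _ _ Lz.
  have ee : e * e = 1 by pm1 he; ring.
  case: i Xz => /= Xz; rewrite ?Rabs_pm // -?Rmult_assoc ?ee ?Rmult_1_l;
    first [ apply: lam_ninf; rewrite ?Rabs_pm //
          | rewrite (rmax_tac_ok (Rabs z1) (Rabs z2) (Rabs z3)); [apply: lam_ninf => // | by auto] ].
- have -> : ptadd p (ptscale e (ptscale e (tau i e (Pt z1 z2 z3)))) = tau i e (ptadd (sig i e p) (ptscale 1 (Pt z1 z2 z3))).
    case: p {Xz} => x y w; pm1 he; case: i; apply: pt_eq => /=; ring.
  exact: Xz.
Qed.

Lemma lam_bounds a x y z : a = Rmax (Rabs x) (Rmax (Rabs y) (Rabs z)) ->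
  0 <= a /\ Rabs x <= a /\ Rabs y <= a /\ Rabs z <= a.
Proof.
move=> ->. have := Rmax_l (Rabs x) (Rmax (Rabs y) (Rabs z)).
have := Rmax_l (Rabs y) (Rabs z). have := Rmax_r (Rabs y) (Rabs z).
have := Rmax_r (Rabs x) (Rmax (Rabs y) (Rabs z)). have := Rabs_pos x.
move=> *; split; first lra. split; first lra. split; lra.
Qed.

Lemma Rmax_is a x y z : 0 <= a -> Rabs x <= a -> Rabs y <= a -> Rabs z <= a ->
  (a = x \/ a = y \/ a = z) -> a = Rmax (Rabs x) (Rmax (Rabs y) (Rabs z)).
Proof.
move=> h0 h1 h2 h3 h.
have : a = Rabs x \/ a = Rabs y \/ a = Rabs z.
  case: h => [e|[e|e]]; [left|right;left|right;right]; rewrite e Rabs_right //; lra.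
rewrite /Rmax; case=> [e|[e|e]]; repeat case: Rle_dec => /=; lra.
Qed.

Lemma cone_transport_rev X p i e (he : e = 1 \/ e = -1) :
  cone_meets X p i e -> cone_meets (fun q => X (tau i e q)) (sig i e p) I1 1.
Proof.
move=> [[z1 z2 z3] [Lz Xz]]; exists (sig i e (ptscale e (Pt z1 z2 z3))); split.
- move: Lz; rewrite /Lambda /ninf /= => Lz.
  have ee : e * e = 1 by pm1 he; ring.
  case: i Xz Lz => /= Xz Lz; have [h0 [h1 [h2 h3]]] := lam_bounds _ _ _ _ Lz;
    rewrite -?Rmult_assoc ?ee ?Rmult_1_l ?Rabs_pm //; apply: Rmax_is => //; auto.
- have -> : tau i e (ptadd (sig i e p) (ptscale 1 (sig i e (ptscale e (Pt z1 z2 z3)))))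
      = ptadd p (ptscale e (Pt z1 z2 z3)).
    case: p {Xz Lz} => x y w; pm1 he; case: i; apply: pt_eq => /=; ring.
  exact: Xz.
Qed.

Lemma minimal_transport X p i e (he : e = 1 \/ e = -1) :
  minimal_pts X p -> minimal_pts (fun q => X (tau i e q)) (sig i e p).
Proof.
move=> Hm x Xx; have [y [Xy E]] := Hm _ Xx.
exists (sig i e y); split; first by rewrite (tau_sig _ _ he).
rewrite -(sig_tau i e he x) !(dinf_sig i e he); exact: E.
Qed.

Lemma min_surr X (HS : forall q, S2 q -> X q) (HD : forall q, X q -> D3 q) p :
  minimal_pts X p -> surrounding X p.
Proof.
move=> Hm i e he; apply: (cone_transport _ _ _ _ he).
apply: main1; last exact: minimal_transport.
- move=> q Sq; apply: HS; apply/(S2_tau i _ he); exact: Sq.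
- move=> q Xq; apply/(D3_tau i _ he); exact: HD.
Qed.

Lemma surr_min X p : surrounding X p -> minimal_pts X p.
Proof.
move=> Hs x Xx.
have [i hi] := dinf_coord_ex x p.
have [e [he hsg]] : exists e, (e = 1 \/ e = -1) /\ e * (coord x i - coord p i) = dinf x p.
  case: (Rle_lt_dec 0 (coord x i - coord p i)) => h.
  - exists 1; split; [by left|]; rewrite hi Rabs_right; [ring|lra].
  - exists (-1); split; [by right|]; rewrite hi Rabs_left; [ring|lra].
have [z [Lz Xz]] := Hs i (- e) ltac:(case: he => ->; [right|left]; ring).
exists (ptadd p (ptscale (- e) z)); split => //.
apply: Rle_antisym; last exact: dinf_tri.
have dz : dinf p (ptadd p (ptscale (- e) z)) = ninf z.
  rewrite /dinf /ninf /ptsub /ptadd /ptscale /=.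
  have k : forall u v, u + -1 * (u + - e * v) = e * v by move=> u v; ring.
  rewrite !k !(Rabs_pm _ he) //.
rewrite dz.
apply: Rle_trans (dinf_coord _ _ i).
have cz : coord (ptadd p (ptscale (- e) z)) i = coord p i - e * coord z i.
  by case: i {hi hsg Lz}; rewrite /=; ring.
rewrite cz -Lz -hsg.
have -> : coord x i - (coord p i - e * coord z i) = e * (e * (coord x i - coord p i) + coord z i).
  have ee : e * e = 1 by case: he => ->; ring.
  by rewrite Rmult_plus_distr_l -Rmult_assoc ee; ring.
rewrite (Rabs_pm _ he); exact: Rle_abs.
Qed.

Lemma cone1_DS X Y (HX : forall q, X q -> D3 q) (HY : forall q, S2 q -> Y q) p :
  cone_meets X p I1 1 -> cone_meets Y p I1 1.
Proof.
move=> /cone1P [y [Xy [h2 h3]]]; apply/cone1P.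
have Dy := HX _ Xy; rewrite /D3 in Dy.
set s := sqrt (1 - py y ^ 2 - pz y ^ 2).
have hs : s * s = 1 - py y ^ 2 - pz y ^ 2 by apply: sqrt_sqrt; nra.
have s0 : 0 <= s by apply: sqrt_pos.
have ys : px y <= s.
  case: (Rle_lt_dec (px y) 0) => h; first lra.
  nra.
exists (Pt s (py y) (pz y)); split.
- apply: HY; rewrite /S2 /=; nra.
- rewrite /=; split; lra.
Qed.

Lemma surr_D3_S2 p : surrounding D3 p <-> surrounding S2 p.
Proof.
split => Hs i e he.
- apply: (cone_transport _ _ _ _ he); apply: (cone1_DS (fun q => D3 (tau i e q))).
  + move=> q; move/(D3_tau i _ he); done.
  + move=> q Sq; apply/(S2_tau i _ he); exact: Sq.
  + exact: (cone_transport_rev _ _ _ _ he (Hs i e he)).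
- have [z [Lz Sz]] := Hs i e he; exists z; split => //.
  move: Sz; rewrite /S2 /D3 => ->; lra.
Qed.

Lemma lub_max (E : R -> Prop) (m : R) : E m -> (forall r, E r -> r <= m) ->
  Rbar.real (Lub_Rbar E) = m.
Proof.
move=> Em ub; rewrite (is_lub_Rbar_unique E m) //; split.
- move=> r Er; exact: ub.
- move=> b hb; exact: hb.
Qed.

Lemma lub_fin (E : R -> Prop) (e0 M : R) : E e0 -> (forall r, E r -> r <= M) ->
  (forall r, E r -> r <= Rbar.real (Lub_Rbar E)) /\
  (forall M', (forall r, E r -> r <= M') -> Rbar.real (Lub_Rbar E) <= M').
Proof.
move=> E0 ub; have [h1 h2] := Lub_Rbar_correct E.
have hM : Rbar_le (Lub_Rbar E) M by apply: h2 => r Er; exact: ub.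
have he0 : Rbar_le e0 (Lub_Rbar E) by apply: h1.
case: (Lub_Rbar E) h1 h2 hM he0 => [l| |] h1 h2 hM he0 //=.
split.
- move=> r Er; exact: (h1 r Er).
- move=> M' hM'; exact: (h2 M' hM').
Qed.

Definition pt_dec (a b : pt) : {a = b} + {a <> b}.
Proof.
case: (Req_EM_T (px a) (px b)) => h1; last by right => e; apply: h1; rewrite e.
case: (Req_EM_T (py a) (py b)) => h2; last by right => e; apply: h2; rewrite e.
case: (Req_EM_T (pz a) (pz b)) => h3; last by right => e; apply: h3; rewrite e.
left; exact: pt_eq.
Defined.

Definition O3 := Pt 0 0 0.

Lemma D3_bound y : D3 y -> dinf O3 y <= 1.
Proof.
rewrite /D3 dinf_expand /= => h.
have b : forall u, u ^ 2 <= 1 -> Rabs (0 - u) <= 1.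
  move=> u hu; rewrite Rminus_0_l Rabs_Ropp; apply: Rabs_le; split; nra.
apply: Rmax_lub; first (apply: b; nra).
apply: Rmax_lub; apply: b; nra.
Qed.

Section TS.
Variable X : pt -> Prop.
Hypothesis hX : X = S2 \/ X = D3.

Lemma XS2 q : S2 q -> X q.
Proof. case: hX => ->; rewrite /S2 /D3 //; lra. Qed.
Lemma XD3 q : X q -> D3 q.
Proof. case: hX => ->; rewrite /S2 /D3 //; lra. Qed.

Definition fp (p : pt) : sub X -> R := fun y => dinf p (proj1_sig y).

Lemma fp_bound p y : Rabs (fp p y) <= dinf p O3 + 1.
Proof.
rewrite /fp Rabs_right; last by apply: Rle_ge; apply: dinf_pos.
apply: Rle_trans (dinf_tri _ O3 _) _.
apply: Rplus_le_compat_l; apply: D3_bound; apply: XD3; exact: proj2_sig y.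
Qed.

Lemma fp_Delta p : in_Delta (subd X) (fp p).
Proof.
split; first by exists (dinf p O3 + 1); exact: fp_bound.
move=> x x'; rewrite /fp /subd; apply: Rle_ge.
rewrite dinf_sym in |- *; apply: Rle_trans (dinf_tri _ p _) _.
rewrite (dinf_sym _ p); lra.
Qed.

Lemma fp_ts p : minimal_pts X p -> in_tight_span (subd X) (fp p).
Proof.
move=> Hm; split; first exact: fp_Delta.
move=> g [_ gD] gle x; apply: Rle_antisym; first exact: gle.
have [y [Xy E]] := Hm _ (proj2_sig x).
have := gD x (exist _ y Xy); rewrite /subd /= => h.
have := gle (exist _ y Xy); rewrite /fp /= => h2.
rewrite /fp (dinf_sym p); lra.
Qed.

Lemma lip_d (x p : pt) a b :
  Rabs ((dinf x a - dinf p a) - (dinf x b - dinf p b)) <= 2 * dinf a b.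
Proof.
have t1 := dinf_tri x a b; have t2 := dinf_tri x b a.
have t3 := dinf_tri p a b; have t4 := dinf_tri p b a.
rewrite (dinf_sym b a) in t2 t4.
apply: Rabs_le; split; lra.
Qed.

Lemma ts_min p : in_tight_span (subd X) (fp p) -> minimal_pts X p.
Proof.
move=> [fD fext] x Xx.
have [c [Xc hc]] := evt X hX (fun y => dinf x y - dinf p y) 2 Rlt_0_2 (lip_d x p).
have [s hsdef] : exists s, s = dinf x c - dinf p c by eexists.
rewrite -hsdef in hc.
case: (Rle_lt_dec (dinf x p) s) => hs.
  exists c; split => //; apply: Rle_antisym; last exact: dinf_tri.
  have := dinf_tri x p c. lra.
exfalso.
pose g (u : sub X) := if pt_dec (proj1_sig u) x then Rmax s 0 else fp p u.
have gD : in_Delta (subd X) g.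
  split.
    exists (Rabs (Rmax s 0) + (dinf p O3 + 1)) => u; rewrite /g.
    have h1 := Rabs_pos (Rmax s 0); have h2 := fp_bound p u.
    have h3 := Rabs_pos (fp p u).
    case: pt_dec => ? /=; lra.
  move=> u u'; rewrite /g /subd; apply: Rle_ge.
  have m0 := Rmax_r s 0; have m1 := Rmax_l s 0.
  case: pt_dec => e1; case: pt_dec => e2 /=.
  - rewrite e1 e2 dinf_refl; lra.
  - have := hc _ (proj2_sig u'); rewrite e1 /fp => ?; lra.
  - have := hc _ (proj2_sig u); rewrite e2 /fp dinf_sym => ?; lra.
  - have := proj2 (fp_Delta p) u u'; rewrite /subd => ?; lra.
have gle : forall u, g u <= fp p u.
  move=> u; rewrite /g; case: pt_dec => e /=; last lra.
  rewrite /fp e dinf_sym; apply: Rmax_lub; first lra.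
  exact: dinf_pos.
have := fext g gD gle (exist _ x Xx); rewrite /g /fp /=.
case: pt_dec => // ? /= hm.
have hx := hc x Xx; rewrite dinf_refl in hx.
have sy := dinf_sym x p.
clear gD gle fext; clearbody g.
case: (Rmax_cases s 0) => hm2; rewrite hm2 in hm; lra.
Qed.

Lemma ts_surr p : in_tight_span (subd X) (fp p) -> surrounding X p.
Proof. move=> h; apply: min_surr; [exact: XS2 | exact: XD3 | exact: ts_min]. Qed.


Lemma dz_gen p e z : (e = 1 \/ e = -1) -> dinf p (ptadd p (ptscale e z)) = ninf z.
Proof.
move=> he; rewrite /dinf /ninf /ptsub /ptadd /ptscale /=.
have k : forall u v, u + -1 * (u + e * v) = (- e) * v by move=> u v; ring.
have he' : - e = 1 \/ - e = -1 by case: he => ->; [right|left]; ring.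
by rewrite !k !(Rabs_pm _ he').
Qed.

Lemma supdist_fp p q : surrounding X p -> supdist (fp p) (fp q) = dinf p q.
Proof.
move=> Hs; rewrite /supdist; apply: lub_max.
- have [i hi] := dinf_coord_ex p q.
  have [e [he hsg]] : exists e, (e = 1 \/ e = -1) /\ e * (coord p i - coord q i) = dinf p q.
    case: (Rle_lt_dec 0 (coord p i - coord q i)) => h.
    + exists 1; split; [by left|]; rewrite hi Rabs_right; [ring|lra].
    + exists (-1); split; [by right|]; rewrite hi Rabs_left; [ring|lra].
  have [z [Lz Xz]] := Hs i e he.
  exists (exist _ _ Xz); rewrite /fp /= (dz_gen _ _ _ he).
  have cz : coord (ptadd p (ptscale e z)) i = coord p i + e * coord z i.
    by case: i {hi hsg Lz Xz}; rewrite /=; ring.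
  have h1 := dinf_coord q (ptadd p (ptscale e z)) i.
  rewrite cz in h1.
  have ee : e * e = 1 by case: he => ->; ring.
  have eq1 : coord q i - (coord p i + e * coord z i) = - e * (e * (coord p i - coord q i) + coord z i).
    by rewrite Rmult_plus_distr_l -Ropp_mult_distr_l -Rmult_assoc ee; ring.
  rewrite eq1 in h1.
  have he' : - e = 1 \/ - e = -1 by case: he => ->; [right|left]; ring.
  rewrite (Rabs_pm _ he') hsg in h1.
  have h2 := dinf_tri q p (ptadd p (ptscale e z)).
  rewrite (dz_gen _ _ _ he) (dinf_sym q p) in h2.
  have hz : 0 <= ninf z by rewrite /ninf; apply: Rle_trans (Rabs_pos (px z)) _; apply: Rmax_l.
  have hd := dinf_pos p q.
  rewrite /Lambda in Lz; rewrite Lz Rabs_right in h1; last lra.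
  have -> : ninf z - dinf q (ptadd p (ptscale e z)) = - dinf p q by lra.
  by rewrite Rabs_Ropp Rabs_right //; lra.
- move=> r [x ->]; rewrite /fp.
  have t1 := dinf_tri p q (proj1_sig x); have t2 := dinf_tri q p (proj1_sig x).
  rewrite (dinf_sym q p) in t2.
  apply: Rabs_le; split; lra.
Qed.

Lemma fp_ts_surr (a : sub (surrounding X)) : in_tight_span (subd X) (fp (proj1_sig a)).
Proof. apply: fp_ts; apply: surr_min; exact: (proj2_sig a). Qed.

Definition phiX (a : sub (surrounding X)) : tight_span (subd X) :=
  exist _ (fp (proj1_sig a)) (fp_ts_surr a).

Lemma phiX_dist a a' : ts_dist (subd X) (phiX a) (phiX a') = subd (surrounding X) a a'.
Proof. rewrite /ts_dist /phiX /subd /=; apply: supdist_fp; exact: (proj2_sig a). Qed.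

Lemma sig_eq {A : Type} {P : A -> Prop} (a b : {x | P x}) : proj1_sig a = proj1_sig b -> a = b.
Proof. case: a => a pa; case: b => b pb /= e; subst b; f_equal; apply: proof_irrelevance. Qed.

Lemma phiX_surj b : exists a, phiX a = b.
Proof.
case: b => f [[fB fD] fext].
have X0 : X (Pt 1 0 0) by apply: XS2; rewrite /S2 /=; lra.
set x0 : sub X := exist _ _ X0.
pose E i := fun r => exists x : sub X, r = coord (proj1_sig x) i - f x.
have bnd : forall i (x x' : sub X), coord (proj1_sig x') i - f x' <= coord (proj1_sig x) i + f x.
  move=> i x x'; have := fD x x'; rewrite /subd => h.
  have := dinf_coord (proj1_sig x') (proj1_sig x) i; rewrite dinf_sym => h2.
  have := Rle_abs (coord (proj1_sig x') i - coord (proj1_sig x) i). lra.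
have E0 : forall i, E i (coord (proj1_sig x0) i - f x0) by move=> i; exists x0.
have Eb : forall i r, E i r -> r <= coord (proj1_sig x0) i + f x0.
  move=> i r [x ->]; exact: bnd.
have L i := lub_fin (E i) _ _ (E0 i) (Eb i).
pose p := Pt (Rbar.real (Lub_Rbar (E I1))) (Rbar.real (Lub_Rbar (E I2))) (Rbar.real (Lub_Rbar (E I3))).
have cp : forall i, coord p i = Rbar.real (Lub_Rbar (E i)) by case.
have le : forall x, fp p x <= f x.
  move=> x; rewrite /fp.
  have [i ->] := dinf_coord_ex p (proj1_sig x).
  rewrite cp; have [l1 l2] := L i.
  have u1 : coord (proj1_sig x) i - f x <= Rbar.real (Lub_Rbar (E i)) by apply: l1; exists x.
  have u2 : Rbar.real (Lub_Rbar (E i)) <= coord (proj1_sig x) i + f x.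
    apply: l2 => r [x' ->]; exact: bnd.
  apply: Rabs_le; split; lra.
have eqf : forall x, fp p x = f x := fext _ (fp_Delta p) le.
have ef : fp p = f by apply: functional_extensionality.
have hts : in_tight_span (subd X) (fp p) by rewrite ef; split; [split|].
exists (exist _ p (ts_surr p hts)).
apply: sig_eq; rewrite /phiX /=; exact: ef.
Qed.

Lemma isoX : isometric (sub (surrounding X)) (tight_span (subd X))
  (subd (surrounding X)) (ts_dist (subd X)).
Proof. exists phiX; split; [exact: phiX_dist | exact: phiX_surj]. Qed.

End TS.

Lemma hS2 : S2 = S2 \/ S2 = D3. Proof. by left. Qed.
Lemma hD3 : D3 = S2 \/ D3 = D3. Proof. by right. Qed.

Lemma supdist_self {T : Type} (t0 : T) (g : T -> R) : supdist g g = 0.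
Proof.
rewrite /supdist; apply: lub_max.
- by exists t0; rewrite Rminus_diag Rabs_R0.
- by move=> r [x ->]; rewrite Rminus_diag Rabs_R0; lra.
Qed.

Lemma surrD3_of_S2 (a : sub (surrounding D3)) : surrounding S2 (proj1_sig a).
Proof. apply/surr_D3_S2; exact: (proj2_sig a). Qed.

Lemma iso_DS : isometric (tight_span (subd D3)) (tight_span (subd S2))
             (ts_dist (subd D3)) (ts_dist (subd S2)).
Proof.
have ch : forall f : tight_span (subd D3), {a | phiX D3 hD3 a = f}.
  move=> f; apply: constructive_indefinite_description; exact: phiX_surj.
pose psi f := phiX S2 hS2 (exist _ (proj1_sig (proj1_sig (ch f))) (surrD3_of_S2 (proj1_sig (ch f)))).
have X0 : D3 (Pt 1 0 0) by rewrite /D3 /=; lra.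
exists psi; split.
- move=> f f'; rewrite /psi phiX_dist /subd /=.
  case: (ch f) => a ea; case: (ch f') => a' ea' /=.
  rewrite -ea -ea' phiX_dist //.
- move=> h; have [b eb] := phiX_surj S2 hS2 h.
  have bD : surrounding D3 (proj1_sig b) by apply/surr_D3_S2; exact: (proj2_sig b).
  exists (phiX D3 hD3 (exist _ _ bD)).
  rewrite /psi; case: (ch _) => a ea /=.
  have d0 : dinf (proj1_sig a) (proj1_sig b) = 0.
    have := phiX_dist D3 hD3 a (exist _ _ bD); rewrite ea /subd /= => <-.
    rewrite /ts_dist; exact: (supdist_self (exist _ _ X0)).
  rewrite -eb; congr (phiX S2 hS2 _); apply: sig_eq => /=; exact: dinf_eq0.
Qed.

Theorem theorem5p17 :
  (* (1) *)
  ((forall p, surrounding S2 p <-> minimal_pts S2 p) /\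
   isometric (sub (surrounding S2)) (tight_span (subd S2))
             (subd (surrounding S2)) (ts_dist (subd S2))) /\
  (* (2) *)
  ((forall p, surrounding D3 p <-> minimal_pts D3 p) /\
   (forall p, minimal_pts D3 p <-> surrounding S2 p) /\
   isometric (sub (surrounding D3)) (tight_span (subd D3))
             (subd (surrounding D3)) (ts_dist (subd D3)) /\
   isometric (tight_span (subd D3)) (tight_span (subd S2))
             (ts_dist (subd D3)) (ts_dist (subd S2))).
Proof.
have fD : forall p, surrounding D3 p <-> minimal_pts D3 p.
  move=> p; split; first exact: surr_min.
  apply: min_surr => // q; rewrite /S2 /D3 => ->; lra.
split; split.
- move=> p; split; first exact: surr_min.
  apply: min_surr => // q; rewrite /S2 /D3 => ->; lra.
- exact: (isoX S2 hS2).
- exact: fD.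
- split.
    move=> p; rewrite -fD; exact: surr_D3_S2.
  split; [exact: (isoX D3 hD3) | exact: iso_DS].
Qed.
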